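(* Let $(I,\leq)$ be a finite poset with a unique maximal element, and let $F,G\subseteq K_I$ be nonzero subfunctors of the constant functor $K_I$. Then the following are equivalent: (1) $F\preccurlyeq G$, i.e.\ $\mathrm{supp}(F)\supseteq\mathrm{supp}(G)$; (2) $\mathrm{Nat}(G,F)\neq0$; (3) $\dim\mathrm{Nat}(G,F)=1$.
   Context: $K$ is a field; $K_I\colon I\to\mathrm{vect}_K$ is the constant functor with value $K$ and identity transition maps. For a subfunctor $F\subseteq K_I$, $\mathrm{supp}(F)=\{v\in I\mid F(v)\neq0\}$. $\mathrm{Nat}(G,F)$ denotes the $K$-vector space of natural transformations $G\to F$. *)

(* Defs.v *)
From HB Require Import structures.
From mathcomp Require Import all_boot all_order all_algebra.
Set Implicit Arguments. Unset Strict Implicit. Unset Printing Implicit Defensive.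
Import Order.TTheory GRing.Theory.
Local Open Scope ring_scope.
Local Open Scope order_scope.

(* The constant functor K_I sends every v to the 1-dimensional K-space K^o
   (K regarded as a vector space over itself) with identity transition maps.
   A subfunctor F of K_I is a family of subspaces F v of K^o such that the
   identity transition maps restrict, i.e. F v <= F w whenever v <= w. *)
Definition is_subfunctor (K : fieldType) (d : Order.disp_t) (I : finPOrderType d)
    (F : I -> {vspace K^o}) : Prop :=
  forall v w : I, v <= w -> (F v <= F w)%VS.

Definition supp (K : fieldType) (d : Order.disp_t) (I : finPOrderType d)
    (F : I -> {vspace K^o}) : {set I} :=
  [set v | F v != 0%VS].

Definition subf_preceq (K : fieldType) (d : Order.disp_t) (I : finPOrderType d)
    (F G : I -> {vspace K^o}) : Prop :=
  supp G \subset supp F.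

Definition nat_family (K : fieldType) (d : Order.disp_t) (I : finPOrderType d)
    (G F : I -> {vspace K^o}) :=
  forall v : I, 'Hom(subvs_of (G v), subvs_of (F v)).

(* Naturality: for v <= w, eta w \o (G(v<=w)) = (F(v<=w)) \o eta v, where the
   transition maps are the restrictions of the identity of K (the inclusions
   G v -> G w, F v -> F w), written as vsproj (G w) \o vsval. *)
Definition is_natural (K : fieldType) (d : Order.disp_t) (I : finPOrderType d)
    (G F : I -> {vspace K^o}) (eta : nat_family G F) : Prop :=
  forall (v w : I), v <= w -> forall x : subvs_of (G v),
    vsproj (F w) (vsval (eta v x)) = eta w (vsproj (G w) (vsval x)).

Definition nat_is_zero (K : fieldType) (d : Order.disp_t) (I : finPOrderType d)
    (G F : I -> {vspace K^o}) (eta : nat_family G F) : Prop :=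
  forall v : I, eta v = 0.

Definition Nat_nonzero (K : fieldType) (d : Order.disp_t) (I : finPOrderType d)
    (G F : I -> {vspace K^o}) : Prop :=
  exists eta : nat_family G F, is_natural eta /\ ~ nat_is_zero eta.

(* dim Nat(G,F) = 1 : Nat(G,F) is spanned by a single nonzero vector, i.e.
   there is a nonzero natural eta such that every natural eta' is a scalar
   multiple c * eta (componentwise, Nat(G,F) having the componentwise
   K-vector space structure). *)
Definition Nat_dim1 (K : fieldType) (d : Order.disp_t) (I : finPOrderType d)
    (G F : I -> {vspace K^o}) : Prop :=
  exists eta : nat_family G F, [/\ is_natural eta, ~ nat_is_zero eta &
    forall eta' : nat_family G F, is_natural eta' ->
      exists c : K, forall v : I, eta' v = c *: eta v].

Definition is_maximal (d : Order.disp_t) (I : finPOrderType d) (m : I) : Prop :=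
  forall v : I, m <= v -> v = m.

(* Main.v *)
Require Import Defs.
From HB Require Import structures.
From mathcomp Require Import all_boot all_order all_algebra.
Import Order.TTheory GRing.Theory.
Local Open Scope ring_scope.

Lemma below_max (d : Order.disp_t) (I : finPOrderType d) (m : I)
  (hm : forall m' : I, is_maximal m' -> m' = m) (v : I) : (v <= m)%O.
Proof.
have Pv : (v <= v)%O by [].
case: (@arg_minnP I v (fun w => (v <= w)%O) (fun w => #|[set u | (w < u)%O]|) Pv).
move=> w vw wmin.
suff -> : m = w by [].
apply/esym/hm => u wu; apply/eqP; rewrite eq_sym; apply/negP => /negP nwu.
have wltu : (w < u)%O by rewrite lt_neqAle nwu.
have := wmin u (le_trans vw wu).
apply/negP; rewrite -ltnNge; apply: proper_card; apply/properP; split.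
  by apply/subsetP => x; rewrite !inE => /(lt_trans wltu).
by exists u; rewrite !inE ?ltxx.
Qed.

Lemma full1 (K : fieldType) (U : {vspace K^o}) : U != 0%VS -> U = fullv.
Proof.
move=> U0; apply/eqP; rewrite eqEdim subvf dimvf /=.
rewrite -dimv_eq0 in U0. by rewrite /dim /= lt0n.
Qed.

Lemma one_in (K : fieldType) (U : {vspace K^o}) : U != 0%VS -> (1 : K^o) \in U.
Proof. by move=> /full1 ->; rewrite memvf. Qed.

Lemma vsval_inj (K : fieldType) (U : {vspace K^o}) : injective (@vsval _ _ U).
Proof. exact: (can_inj (@vsvalK _ _ U)). Qed.

Lemma sub0_eq0 (K : fieldType) (U : {vspace K^o}) (y : subvs_of U) : U = 0%VS -> y = 0.
Proof.
move=> U0; apply: vsval_inj; rewrite linear0.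
have := subvsP y; move: (vsval y) => z; rewrite U0 memv0 => /eqP //.
Qed.

Lemma zero_nat (K : fieldType) (d : Order.disp_t) (I : finPOrderType d) (m : I)
  (below : forall v : I, (v <= m)%O)
  (F G : I -> {vspace K^o}) (hF : is_subfunctor F)
  (Gm : G m != 0%VS) (eta : nat_family G F) :
  is_natural eta -> eta m (vsproj (G m) 1) = 0 -> forall u, eta u = 0.
Proof.
move=> nat e0.
have em : eta m = 0.
  apply/lfunP => y; rewrite zero_lfunE.
  have -> : y = (vsval y : K) *: (vsproj (G m) 1 : subvs_of (G m)).
    apply: vsval_inj; rewrite linearZ /= vsprojK ?one_in //.
    by rewrite [_ *: _]mulr1.
  by rewrite linearZ /= e0 scaler0.
move=> u; apply/lfunP => x; rewrite zero_lfunE.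
have := nat u m (below u) x; rewrite em zero_lfunE.
have Fum : vsval (eta u x) \in F m by apply: (subvP (hF u m (below u))); apply: subvsP.
move=> h; apply: vsval_inj; rewrite -(vsprojK Fum) h linear0 //.
Qed.

Theorem proposition6p1 (K : fieldType) (d : Order.disp_t) (I : finPOrderType d)
    (unique_max : exists m : I, is_maximal m /\ forall m' : I, is_maximal m' -> m' = m)
    (F G : I -> {vspace K^o})
    (hF : is_subfunctor F) (hG : is_subfunctor G)
    (hF0 : exists v : I, F v != 0%VS) (hG0 : exists v : I, G v != 0%VS) :
  (subf_preceq F G <-> Nat_nonzero G F) /\ (Nat_nonzero G F <-> Nat_dim1 G F).
Proof.
case: unique_max => m [_ hm].
have below := @below_max _ _ m hm.
have Gm : G m != 0%VS.
  case: hG0 => v Gv; apply: contraNneq Gv => Gm0.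
  by rewrite -subv0 -Gm0 hG.
have Fm : F m != 0%VS.
  case: hF0 => v Fv; apply: contraNneq Fv => Fm0.
  by rewrite -subv0 -Fm0 hF.
have i2 : Nat_nonzero G F -> subf_preceq F G.
  case=> eta [nat nz]; apply/subsetP => v; rewrite !inE => Gv.
  apply/negP => /eqP Fv0; apply: nz => u; apply: (@zero_nat K d I m below F G hF Gm eta nat).
  have := nat v m (below v) (vsproj (G v) 1).
  rewrite (@vsprojK K K^o (G v) 1); last exact: one_in. move=> <-.
  by rewrite (@sub0_eq0 K (F v) (eta v (vsproj (G v) 1)) Fv0) !linear0.
have i3 : Nat_dim1 G F -> Nat_nonzero G F.
  by case=> eta [nat nz _]; exists eta.
suff i1 : subf_preceq F G -> Nat_dim1 G F by split; split; auto.
move=> sub.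
pose eta1 : nat_family G F := fun v => ((linfun (vsproj (F v))) \o linfun vsval)%VF.
have e1E v x : eta1 v x = vsproj (F v) (vsval x) by rewrite comp_lfunE !lfunE.
have nat1 : is_natural eta1.
  move=> v w vw x; rewrite !e1E.
  have Gvw : vsval x \in G w by apply: (subvP (hG v w vw)); apply: subvsP.
  rewrite (vsprojK Gvw).
  have [Gv0|Gv] := eqVneq (G v) 0%VS.
    have : vsval x \in G v := subvsP x.
    move: (vsval x) => z; rewrite Gv0 memv0 => /eqP ->; by rewrite !linear0.
  have Fv : F v != 0%VS.
    by move/subsetP: sub => /(_ v); rewrite !inE => ->.
  by rewrite vsprojK // (@full1 K (F v) Fv) memvf.
have e1m : vsval (eta1 m (vsproj (G m) 1)) = 1.
  by rewrite e1E (@vsprojK K K^o (G m) 1 (@one_in K _ Gm)) (@vsprojK K K^o (F m) 1 (@one_in K _ Fm)).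
exists eta1; split => //.
  move=> /(_ m) e0; move: e1m; rewrite e0 zero_lfunE linear0 => /eqP.
  by rewrite eq_sym oner_eq0.
move=> eta' nat'.
pose c : K := vsval (eta' m (vsproj (G m) 1)).
exists c.
pose eta2 : nat_family G F := fun v => eta' v - c *: eta1 v.
have nat2 : is_natural eta2.
  move=> v w vw x; rewrite /eta2 !add_lfunE !opp_lfunE !scale_lfunE.
  by rewrite !raddfD !raddfN /= !linearZ /= (nat' v w vw) (nat1 v w vw).
have z2 := @zero_nat K d I m below F G hF Gm eta2 nat2.
move=> v; apply/eqP; rewrite -subr_eq0; apply/eqP; apply: z2 v.
apply: vsval_inj; rewrite /eta2 add_lfunE opp_lfunE scale_lfunE.
rewrite raddfB /= linearZ /= e1m.
by rewrite [_ *: _]mulrN1 subrr.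
Qed.
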